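(* Let $n\ge 1$ and let $M=\Gamma(H\,\overrightarrow{\times}\,G,(u,0))$, where $(H,u)$ is a linearly ordered group with strong unit $u$ and $G$ is a Dedekind $\sigma$-complete $\ell$-group. Let $x:\mathcal B(\mathbb R^n)\to M$ be an $n$-dimensional observable and define $F:\mathbb R^n\to M$ by $$F(t_1,\ldots,t_n)=x\big((-\infty,t_1)\times\cdots\times(-\infty,t_n)\big).$$ Then: (1) $F(s_1,\ldots,s_n)\le F(t_1,\ldots,t_n)$ whenever $s_i\le t_i$ for all $i$; (2) $\bigvee_{(s_1,\ldots,s_n)\in\mathbb R^n}F(s_1,\ldots,s_n)$ exists in $M$ and equals $1=(u,0)$; (3) for every $(t_1,\ldots,t_n)\in\mathbb R^n$, $\bigvee_{(s_1,\ldots,s_n)\ll(t_1,\ldots,t_n)}F(s_1,\ldots,s_n)$ exists and equals $F(t_1,\ldots,t_n)$; (4) for every $i\in\{1,\ldots,n\}$ and all $s_1,\ldots,s_n\in\mathbb R$, $\bigwedge_{t_i\in\mathbb R}F(s_1,\ldots,s_{i-1},t_i,s_{i+1},\ldots,s_n)$ exists and equals $0$; (5) (volume condition) for all reals $a_i\le b_i$, $i=1,\ldots,n$, $$1\ge \Delta_1(a_1,b_1)\big(\cdots\big(\Delta_n(a_n,b_n)F(s_1,\ldots,s_n)\big)\cdots\big)\ge 0,$$ where for a map $K:\mathbb R^n\to H\,\overrightarrow{\times}\,G$, $\Delta_i(a_i,b_i)K(s_1,\ldots,s_n)=K(s_1,\ldots,s_{i-1},b_i,s_{i+1},\ldots,s_n)-K(s_1,\ldots,s_{i-1},a_i,s_{i+1},\ldots,s_n)$,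 the subtraction being computed in the group $H\,\overrightarrow{\times}\,G$.
   Context: For po-groups $H,G$, $H\,\overrightarrow{\times}\,G$ is the group $H\times G$ with the lexicographic order: $(h_1,g_1)\le(h_2,g_2)$ iff $h_1<h_2$, or $h_1=h_2$ and $g_1\le g_2$. For a unital $\ell$-group $(K,v)$, $\Gamma(K,v)$ is the MV-algebra $([0,v];\oplus,',0,v)$ with $a\oplus b=(a+b)\wedge v$, $a'=v-a$. A $\ell$-group $G$ is Dedekind $\sigma$-complete if every countable subset bounded above has a supremum. On $M$ a partial addition is defined: $a+b$ is defined iff $a\le b'$ and then $a+b$ is the group sum. A sequence $(a_m)_m$ in $M$ is summable if every finite subfamily has a (finite, iterated) sum in $M$; its sum $\sum_m a_m$ is the supremum in $M$ of all finite partial sums, if it exists. An $n$-dimensional observable is a map $x:\mathcal B(\mathbb R^n)\to M$ (Borel sets) with $x(\mathbb R^n)=1$ such that for every sequence $(A_m)_m$ of pairwise disjoint Borel sets, $(x(A_m))_m$ is summable and $x(\bigcup_m A_m)=\sum_m x(A_m)$. For $\mathbf s,\mathbf t\in\mathbb R^n$, $\mathbf s\ll\mathbf t$ means $s_i<t_i$ for all $i$. *)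

(* Defs.v *)
From mathcomp Require Import all_boot all_order all_algebra.
From mathcomp Require Import all_classical all_reals all_analysis.
Set Implicit Arguments.
Unset Strict Implicit.
Unset Printing Implicit Defensive.
Import GRing.Theory Num.Theory numFieldNormedType.Exports.
Local Open Scope classical_set_scope.
Local Open Scope ring_scope.

Definition is_sup_in (T : Type) (le : T -> T -> Prop) (P S : set T) (s : T) :=
  [/\ P s, (forall y, S y -> le y s) &
      (forall b, P b -> (forall y, S y -> le y b) -> le s b)].

Definition is_inf_in (T : Type) (le : T -> T -> Prop) (P S : set T) (s : T) :=
  [/\ P s, (forall y, S y -> le s y) &
      (forall b, P b -> (forall y, S y -> le b y) -> le b s)].

Definition pogroup (G : zmodType) (le : G -> G -> Prop) : Prop :=
  [/\ (forall a, le a a),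
      (forall a b, le a b -> le b a -> a = b),
      (forall a b c, le a b -> le b c -> le a c) &
      (forall a b c, le a b -> le (a + c) (b + c))].

Definition lgroup (G : zmodType) (le : G -> G -> Prop) : Prop :=
  pogroup le /\
  forall a b : G, (exists s, is_sup_in le setT [set a; b] s) /\
                  (exists i, is_inf_in le setT [set a; b] i).

Definition linear_group (G : zmodType) (le : G -> G -> Prop) : Prop :=
  pogroup le /\ forall a b : G, le a b \/ le b a.

Definition strong_unit (G : zmodType) (le : G -> G -> Prop) (u : G) : Prop :=
  le 0 u /\ forall g : G, exists k : nat, le g (u *+ k).

(* Dedekind sigma-complete: every (nonempty) countable subset bounded above
   has a supremum; countable nonempty subsets = ranges of sequences. *)
Definition dedekind_sigma_complete (G : zmodType) (le : G -> G -> Prop) : Prop :=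
  forall f : nat -> G, (exists b, forall k, le (f k) b) ->
    exists s, is_sup_in le setT (range f) s.

Definition lexle (H G : zmodType) (leH : H -> H -> Prop) (leG : G -> G -> Prop)
  (p q : H * G) : Prop :=
  (p.1 <> q.1 /\ leH p.1 q.1) \/ (p.1 = q.1 /\ leG p.2 q.2).

Definition Gamma_set (K : zmodType) (le : K -> K -> Prop) (v : K) : set K :=
  [set a | le 0 a /\ le a v].

(* iterated partial sum a_{i1} + (a_{i2} + (... + 0)) in Gamma(K,v), where
   a + b is defined iff a <= b' = v - b. [isum_eq le v a s b] means the
   iterated sum over the index list s is defined and equals b. *)
Fixpoint isum_eq (K : zmodType) (le : K -> K -> Prop) (v : K) (a : nat -> K)
  (s : seq nat) (b : K) : Prop :=
  match s with
  | [::] => b = 0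
  | i :: s' => exists c, isum_eq le v a s' c /\ le (a i) (v - c) /\ b = a i + c
  end.

Definition summable (K : zmodType) (le : K -> K -> Prop) (v : K) (a : nat -> K) :=
  forall s : seq nat, uniq s -> exists b, isum_eq le v a s b.

Definition is_sum (K : zmodType) (le : K -> K -> Prop) (v : K) (a : nat -> K)
  (sigma : K) :=
  is_sup_in le (Gamma_set le v)
    [set b | exists s : seq nat, uniq s /\ isum_eq le v a s b] sigma.

Definition borel (R : realType) (n : nat) : set (set 'rV[R]_n) :=
  <<s [set A : set 'rV[R]_n | open A] >>.

Definition observable (R : realType) (n : nat) (K : zmodType)
  (le : K -> K -> Prop) (v : K) (x : set 'rV[R]_n -> K) : Prop :=
  [/\ (forall A, borel A -> Gamma_set le v (x A)),
      x setT = v &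
      (forall A : nat -> set 'rV[R]_n,
        (forall m, borel (A m)) ->
        (forall i j, i <> j -> A i `&` A j = set0) ->
        summable le v (fun m => x (A m)) /\
        is_sum le v (fun m => x (A m)) (x (\bigcup_m A m)))].

Definition lbox (R : realType) (n : nat) (t : 'rV[R]_n) : set 'rV[R]_n :=
  [set s | forall i : 'I_n, s ord0 i < t ord0 i].

Definition sll (R : realType) (n : nat) (s t : 'rV[R]_n) : Prop :=
  forall i : 'I_n, s ord0 i < t ord0 i.

Definition upd (R : realType) (n : nat) (s : 'rV[R]_n) (i : 'I_n) (r : R)
  : 'rV[R]_n := \row_j (if j == i then r else s ord0 j).

Definition Delta (R : realType) (n : nat) (K : zmodType) (i : 'I_n) (a b : R)
  (F : 'rV[R]_n -> K) : 'rV[R]_n -> K :=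
  fun s => F (upd s i b) - F (upd s i a).

Definition volume (R : realType) (n : nat) (K : zmodType) (a b : 'rV[R]_n)
  (F : 'rV[R]_n -> K) : 'rV[R]_n -> K :=
  foldr (fun i G => Delta i (a ord0 i) (b ord0 i) G) F (enum 'I_n).

(* Main.v *)
Require Import Defs.
From mathcomp Require Import all_boot all_order all_algebra.
From mathcomp Require Import all_classical all_reals all_analysis.
Import Order.TTheory GRing.Theory Num.Theory numFieldNormedType.Exports.
Local Open Scope classical_set_scope.
Local Open Scope ring_scope.
Set Implicit Arguments.
Unset Strict Implicit.

Section Ord.
Variables (K : zmodType) (le : K -> K -> Prop) (hpo : pogroup le).

Lemma le_refl' a : le a a. Proof. by case: hpo. Qed.
Lemma le_anti' a b : le a b -> le b a -> a = b. Proof. by case: hpo => _ h _ _; apply: h. Qed.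
Lemma le_trans' a b c : le a b -> le b c -> le a c. Proof. by case: hpo => _ _ h _; apply: h. Qed.
Lemma le_addr' a b c : le a b -> le (a + c) (b + c). Proof. by case: hpo => _ _ _ h; apply: h. Qed.
Lemma le_addl' a b c : le a b -> le (c + a) (c + b).
Proof. by move=> h; rewrite ![c + _]addrC; apply: le_addr'. Qed.
Lemma le_add' a b c d : le a b -> le c d -> le (a + c) (b + d).
Proof. move=> h1 h2; apply: (le_trans' (le_addr' c h1)); exact: le_addl'. Qed.
Lemma le_subE a b : le a b <-> le 0 (b - a).
Proof.
split=> h; first by rewrite -(subrr a); apply: le_addr'.
by have := le_addr' a h; rewrite add0r subrK.
Qed.
Lemma le_sub0E a b : le a b <-> le (a - b) 0.
Proof.
split=> h; first by rewrite -(subrr b); apply: le_addr'.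
by have := le_addr' b h; rewrite add0r subrK.
Qed.
Lemma le_opp' a b : le a b -> le (- b) (- a).
Proof.
move=> h; have := le_addr' (- a - b) h.
have -> : a + (- a - b) = - b by rewrite addrA subrr add0r.
by have -> : b + (- a - b) = - a by rewrite addrC -addrA addNr addr0.
Qed.

Lemma sum_ge0' (I : Type) (s : seq I) (P : pred I) (a : I -> K) :
  (forall i, P i -> le 0 (a i)) -> le 0 (\sum_(i <- s | P i) a i).
Proof.
move=> h; elim/big_ind: _ => //; first exact: le_refl'.
by move=> x y hx hy; rewrite -(addr0 0); apply: le_add'.
Qed.

Lemma sum_subset (s t : seq nat) (a : nat -> K) :
  uniq s -> uniq t -> {subset s <= t} -> (forall i, i \in t -> le 0 (a i)) ->
  le (\sum_(i <- s) a i) (\sum_(i <- t) a i).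
Proof.
move=> us ut st h.
have pe : perm_eq (seq.filter [pred i | i \in s] t) s.
  apply: uniq_perm; first exact: filter_uniq.
    done.
  by move=> i; rewrite mem_filter /=; case: (boolP (i \in s)) => // iS; rewrite (st _ iS).
rewrite -(perm_big _ (permEl (perm_filterC [pred i | i \in s] t))) big_cat /= (perm_big _ pe).
rewrite -{1}(addr0 (\sum_(i <- s) a i)); apply: le_addl'.
rewrite big_filter big_seq_cond; apply: sum_ge0' => i /andP[it _]; exact: h.
Qed.

Lemma sum_zero_out (s t : seq nat) (a : nat -> K) :
  uniq s -> uniq t -> (forall i, i \notin t -> a i = 0) -> (forall i, i \in t -> le 0 (a i)) ->
  le (\sum_(i <- s) a i) (\sum_(i <- t) a i).
Proof.
move=> us ut z h.
have -> : \sum_(i <- s) a i = \sum_(i <- seq.filter [pred i | i \in t] s) a i.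
  rewrite big_filter [RHS]big_mkcond; apply: eq_bigr => i _.
  by rewrite /=; case: (boolP (i \in t)) => it //; rewrite z.
apply: (sum_subset (filter_uniq _ us)) => //.
by move=> i; rewrite mem_filter => /andP[].
Qed.


Lemma isum_val (v : K) (a : nat -> K) s b : isum_eq le v a s b -> b = \sum_(i <- s) a i.
Proof.
elim: s b => [|i s IH] b /=; first by rewrite big_nil.
by case=> c [/IH -> [_ ->]]; rewrite big_cons.
Qed.

Lemma isum_M (v : K) (a : nat -> K) s b : le 0 v ->
  (forall i, Gamma_set le v (a i)) -> isum_eq le v a s b -> Gamma_set le v b.
Proof.
move=> v0 ha; elim: s b => [|i s IH] b /=; first by move=> ->; split=> //; exact: le_refl'.
case=> c [/IH [c0 cv] [hi ->]]; split.
  by rewrite -(addr0 0); apply: le_add' => //; case: (ha i).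
by have := le_addr' c hi; rewrite subrK.
Qed.
End Ord.


Section Bor.
Variables (R : realType) (n : nat).
Implicit Types (A B : set 'rV[R]_n).

Lemma borel0 : borel (set0 : set 'rV[R]_n). Proof. exact: sigma_algebra0. Qed.
Lemma borelC A : borel A -> borel (~` A).
Proof. by move=> h; rewrite -setTD; exact: sigma_algebraCD. Qed.
Lemma borelT : borel (setT : set 'rV[R]_n).
Proof. by rewrite -setC0; apply: borelC; exact: borel0. Qed.
Lemma borel_bigcup (A : nat -> set 'rV[R]_n) : (forall i, borel (A i)) -> borel (\bigcup_i A i).
Proof. exact: sigma_algebra_bigcup. Qed.
Lemma borelU A B : borel A -> borel B -> borel (A `|` B).
Proof.
move=> hA hB; rewrite -bigcup2E; apply: borel_bigcup => i /=.
by case: ifP => // _; case: ifP => // _; exact: borel0.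
Qed.
Lemma borelI A B : borel A -> borel B -> borel (A `&` B).
Proof.
move=> hA hB; rewrite -(setCK (A `&` B)) setCI; apply: borelC.
by apply: borelU; apply: borelC.
Qed.
Lemma borelD A B : borel A -> borel B -> borel (A `\` B).
Proof. by move=> hA hB; apply: borelI => //; apply: borelC. Qed.
Lemma borel_open A : open A -> borel A.
Proof. by move=> h; apply: sub_sigma_algebra. Qed.

Lemma borel_lt (j : 'I_n) (c : R) : borel [set y : 'rV[R]_n | y ord0 j < c].
Proof.
apply: borel_open.
have -> : [set y : 'rV[R]_n | y ord0 j < c] = (fun y : 'rV[R]_n => y ord0 j) @^-1` [set r | r < c] by [].
apply: open_comp; last exact: open_lt.
move=> y _; exact: coord_continuous.
Qed.

Lemma borel_ge (j : 'I_n) (c : R) : borel [set y : 'rV[R]_n | c <= y ord0 j].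
Proof.
have -> : [set y : 'rV[R]_n | c <= y ord0 j] = ~` [set y : 'rV[R]_n | y ord0 j < c].
  by apply/seteqP; split => y /=; rewrite leNgt => /negP.
by apply: borelC; exact: borel_lt.
Qed.

Lemma borel_all (Q : 'I_n -> set 'rV[R]_n) : (forall j, borel (Q j)) ->
  borel [set y | forall j, Q j y].
Proof.
move=> hQ.
have : forall l : seq 'I_n, borel [set y | forall j, j \in l -> Q j y].
  elim=> [|i l IH].
    have -> : [set y | forall j, j \in [::] -> Q j y] = setT by apply/seteqP; split.
    exact: borelT.
  have -> : [set y | forall j, j \in i :: l -> Q j y] = Q i `&` [set y | forall j, j \in l -> Q j y].
    apply/seteqP; split => y /=.
      by move=> h; split; [apply: h; rewrite inE eqxx | move=> j jl; apply: h; rewrite inE jl orbT].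
    by move=> [qi h] j; rewrite inE => /orP[/eqP -> //|]; exact: h.
  by apply: borelI.
move=> /(_ (enum 'I_n)).
have -> // : [set y | forall j, j \in enum 'I_n -> Q j y] = [set y | forall j, Q j y].
apply/seteqP; split => y /= h j //; first by apply: h; rewrite mem_enum.
Qed.

Lemma borel_lbox (t : 'rV[R]_n) : borel (lbox t).
Proof. by apply: (borel_all (Q := fun j => [set y | y ord0 j < t ord0 j])) => j; exact: borel_lt. Qed.

End Bor.

Section Obs.
Variables (R : realType) (n : nat) (K : zmodType) (le : K -> K -> Prop) (hpo : pogroup le)
  (v : K) (x : set 'rV[R]_n -> K) (hx : observable le v x).

Lemma xM A : borel A -> Gamma_set le v (x A).
Proof. by case: hx => h _ _; apply: h. Qed.

Lemma v0 : le 0 v.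
Proof. by case: hx => h hT _; have [] := h _ (@borelT R n); rewrite hT. Qed.

Lemma x0 : x set0 = 0.
Proof.
case: hx => hM _ hadd.
have [] := hadd (fun _ => set0) (fun _ => @borel0 R n) (fun _ _ _ => setI0 _).
rewrite bigcup0 // => sm [_ ub _].
have [b hb] := sm [:: 0%N; 1%N] erefl.
have := isum_val hb; rewrite !big_cons big_nil addr0 => eb.
have h1 : le (x set0 + x set0) (x set0) by rewrite -eb; apply: ub; exists [:: 0%N; 1%N].
have h2 := le_addr' hpo (- x set0) h1; rewrite addrK subrr in h2.
apply: (le_anti' hpo) => //; by case: (hM _ (@borel0 R n)).
Qed.

Lemma fin_add (A : nat -> set 'rV[R]_n) (N : nat) :
  (forall m, borel (A m)) -> (forall i j, i <> j -> A i `&` A j = set0) ->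
  (forall m, (N <= m)%N -> A m = set0) ->
  x (\bigcup_m A m) = \sum_(0 <= m < N) x (A m).
Proof.
move=> hb hd hz; case: hx => hM _ hadd.
have [sm [σM σub σlst]] := hadd A hb hd.
have [c hc] := sm (iota 0 N) (iota_uniq 0 N).
have ec := isum_val hc.
have cM : Gamma_set le v c by apply: (isum_M hpo v0 _ hc) => i; apply: xM.
have cub : forall y, [set b | exists s, uniq s /\ isum_eq le v (fun m => x (A m)) s b] y -> le y c.
  move=> y [s [us hs]]; rewrite (isum_val hs) ec.
  apply: (sum_zero_out hpo) => //; first exact: iota_uniq.
    by move=> i; rewrite mem_iota add0n leq0n /= -leqNgt => /hz ->; rewrite x0.
  by move=> i _; case: (xM (hb i)).
rewrite (le_anti' hpo (σlst c cM cub)) ?ec //.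
  by rewrite /index_iota subn0.
rewrite -ec; apply: σub; exists (iota 0 N); split=> //; exact: iota_uniq.
Qed.

Lemma add2 A B : borel A -> borel B -> A `&` B = set0 -> x (A `|` B) = x A + x B.
Proof.
move=> hA hB hAB; rewrite -bigcup2E (@fin_add _ 2).
- by rewrite /index_iota /= !big_cons big_nil addr0.
- by move=> i /=; case: ifP => // _; case: ifP => // _; exact: borel0.
- move=> [|[|i]] [|[|j]] ij //=; rewrite ?setI0 ?set0I //; try by exfalso; apply: ij.
  by rewrite setIC.
- by move=> [|[|m]].
Qed.

Lemma xdiff A B : borel A -> borel B -> A `<=` B -> x B = x A + x (B `\` A).
Proof.
move=> hA hB AB; rewrite -add2 //; last 2 first.
- exact: borelD.
- by rewrite setDIK.
by rewrite setDUK.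
Qed.

Lemma xmono A B : borel A -> borel B -> A `<=` B -> le (x A) (x B).
Proof.
move=> hA hB AB; rewrite (xdiff hA hB AB) -{1}(addr0 (x A)); apply: le_addl' => //.
by case: (xM (borelD hB hA)).
Qed.

Lemma sup_incr (C : nat -> set 'rV[R]_n) : (forall k, borel (C k)) ->
  (forall k, C k `<=` C k.+1) ->
  forall b, Gamma_set le v b -> (forall k, le (x (C k)) b) -> le (x (\bigcup_k C k)) b.
Proof.
move=> hC inc b hb hub.
have chain : forall i d, C i `<=` C (d + i)%N.
  move=> i; elim=> [//|d IH] y /IH; rewrite addSn; exact: inc.
pose A k := if k is k'.+1 then C k `\` C k' else C 0.
have hA : forall k, borel (A k) by case=> [|k] /=; [exact: hC|apply: borelD].
have AC : forall k, A k `<=` C k by case=> [|k] //= y [].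
have dis : forall i j, (i < j)%N -> A i `&` A j = set0.
  move=> i [//|j] ij /=; apply/seteqP; split => // y [/AC yi [_ /= nyj]].
  by apply: nyj; rewrite ltnS in ij; rewrite -(subnK ij); apply: chain.
have hd : forall i j, i <> j -> A i `&` A j = set0.
  move=> i j /eqP; rewrite neq_ltn => /orP[/dis //|/dis]; by rewrite setIC.
have un : \bigcup_k A k = \bigcup_k C k.
  apply/seteqP; split => y [k _ hy]; first by exists k => //; exact: AC.
  elim: k hy => [|k IH] hy; first by exists 0%N.
  have [/IH //|nk] := pselect (C k y).
  by exists k.+1.
have part : forall N, x (C N) = \sum_(0 <= m < N.+1) x (A m).
  elim=> [|N IH]; first by rewrite big_nat1.
  by rewrite big_nat_recr //= -IH (xdiff (hC N) (hC N.+1) (inc N)).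
case: hx => _ _ hadd; have [_ [_ _ σlst]] := hadd A hA hd.
rewrite -un; apply: σlst => // y [s [us hs]]; rewrite (isum_val hs).
pose N := \max_(i <- s) i.
apply: (le_trans' hpo _ (hub N)); rewrite part.
apply: (sum_subset hpo us); first exact: iota_uniq.
  by move=> i is_; rewrite mem_iota add0n /= ltnS; exact: (@leq_bigmax_seq _ s predT (fun i => i) i is_).
by move=> i _; case: (xM (hA i)).
Qed.

End Obs.

Lemma lex_pogroup (H G : zmodType) (leH : H -> H -> Prop) (leG : G -> G -> Prop) :
  pogroup leH -> pogroup leG -> pogroup (lexle leH leG).
Proof.
move=> [rH aH tH dH] [rG aG tG dG]; split.
- by move=> p; right.
- move=> [p1 p2] [q1 q2] [[/= ne h1]|[/= e h1]] [[/= ne' h2]|[/= e' h2]].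
  + by exfalso; apply: ne; apply: aH.
  + by exfalso; apply: ne.
  + by exfalso; apply: ne'.
  + by rewrite e (aG _ _ h1 h2) .
- move=> [p1 p2] [q1 q2] [r1 r2] [[/= ne h1]|[/= e h1]] [[/= ne' h2]|[/= e' h2]].
  + left => /=; split; last exact: tH h1 h2.
    by move=> e; apply: ne; apply: aH => //; rewrite e.
  + by left; rewrite -e'.
  + by left; rewrite e.
  + by right; split; [rewrite e e'|apply: tG h1 h2].
- move=> [p1 p2] [q1 q2] [c1 c2] [[/= ne h1]|[/= e h1]].
  + left => /=; split; last exact: dH.
    by move=> /(congr1 (fun z => z - c1)); rewrite !addrK.
  + by right => /=; split; [rewrite e|apply: dG].
Qed.

Lemma bound_fin (R : realType) (n : nat) (r : 'I_n -> R) : exists k : nat, forall i, r i < k%:R.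
Proof.
exists (Num.truncn (\sum_i `|r i|)).+1 => i.
apply: (le_lt_trans _ (truncnS_gt _)).
apply: (le_trans (ler_norm _)).
rewrite (bigD1 i) //= lerDl; apply: sumr_ge0 => j _; exact: normr_ge0.
Qed.

Lemma updE (R : realType) (n : nat) (s : 'rV[R]_n) i r j :
  upd s i r ord0 j = if j == i then r else s ord0 j.
Proof. by rewrite /upd mxE. Qed.

Definition boxl (R : realType) (n : nat) (a b s : 'rV[R]_n) (l : seq 'I_n) : set 'rV[R]_n :=
  [set y | forall j, if j \in l then (a ord0 j <= y ord0 j) && (y ord0 j < b ord0 j)
                     else y ord0 j < s ord0 j].

Lemma borel_boxl (R : realType) (n : nat) (a b s : 'rV[R]_n) l : borel (boxl a b s l).
Proof.
apply: (borel_all (Q := fun j => [set y : 'rV[R]_n | if j \in l then (a ord0 j <= y ord0 j) && (y ord0 j < b ord0 j)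
                     else y ord0 j < s ord0 j])) => j.
case: (j \in l); last exact: borel_lt.
have -> : [set y : 'rV[R]_n | (a ord0 j <= y ord0 j) && (y ord0 j < b ord0 j)] =
   [set y | a ord0 j <= y ord0 j] `&` [set y | y ord0 j < b ord0 j].
  by apply/seteqP; split => y /=; [move/andP|move=> [-> ->]].
by apply: borelI; [exact: borel_ge|exact: borel_lt].
Qed.

Section Vol.
Variables (R : realType) (n : nat) (K : zmodType) (le : K -> K -> Prop) (hpo : pogroup le)
  (v : K) (x : set 'rV[R]_n -> K) (hx : observable le v x) (a b : 'rV[R]_n)
  (hab : forall i, a ord0 i <= b ord0 i).

Lemma vol_box (l : seq 'I_n) : uniq l -> forall s,
  foldr (fun i G => Delta i (a ord0 i) (b ord0 i) G) (fun t => x (lbox t)) l s = x (boxl a b s l).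
Proof.
elim: l => [|i l IH] /=.
  by move=> _ s; congr x; apply/seteqP; split => y /= h j; rewrite ?in_nil; apply: h.
move=> /andP[il ul] s; rewrite /Delta !IH //.
set B := boxl a b (upd s i (b ord0 i)) l; set A := boxl a b (upd s i (a ord0 i)) l.
have AB : A `<=` B.
  move=> y hy j; have := hy j; case: (j \in l) => //; rewrite !updE.
  by case: (j == i) => // /lt_le_trans; apply; apply: hab.
have -> : boxl a b s (i :: l) = B `\` A.
  apply/seteqP; split => y hy.
    split.
      move=> j; have := hy j; rewrite inE !updE; case: eqP => [->|ji]; first by rewrite (negbTE il) => /andP[].
      by [].
    move=> hA; have := hA i; have := hy i; rewrite inE eqxx (negbTE il) updE eqxx /=.
    by move=> /andP[]; rewrite leNgt => /negP.
  case: hy => hB hA j; rewrite inE; case: (eqVneq j i) => [->|ji] /=.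
    have := hB i; rewrite (negbTE il) updE eqxx => ->; rewrite andbT leNgt; apply/negP => yi.
    apply: hA => k; have := hB k; case: (k \in l) => //; rewrite !updE.
    by case: eqP => [->|].
  by have := hB j; case: (j \in l) => //; rewrite updE (negbTE ji).
rewrite (xdiff hpo hx _ _ AB); [by rewrite addrC addKr|exact: borel_boxl|exact: borel_boxl].
Qed.

End Vol.

Unset Implicit Arguments.
Set Strict Implicit.
Theorem lemma3p2 (R : realType) (n : nat) (hn : (0 < n)%N)
  (H : zmodType) (leH : H -> H -> Prop) (u : H)
  (G : zmodType) (leG : G -> G -> Prop)
  (hH : linear_group leH) (hu : strong_unit leH u)
  (hG : lgroup leG) (hGs : dedekind_sigma_complete leG)
  (x : set 'rV[R]_n -> (H * G)%type)
  (hx : observable (lexle leH leG) (u, 0) x) :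
  let le := lexle leH leG in
  let v : (H * G)%type := (u, 0) in
  let M := Gamma_set le v in
  let F := fun t : 'rV[R]_n => x (lbox t) in
  [/\ (forall s t : 'rV[R]_n, (forall i, s ord0 i <= t ord0 i) -> le (F s) (F t)),
      is_sup_in le M (range F) v,
      (forall t : 'rV[R]_n, is_sup_in le M [set F s | s in [set s' : 'rV[R]_n | sll s' t]] (F t)),
      (forall (i : 'I_n) (s : 'rV[R]_n),
         is_inf_in le M [set F (upd s i r) | r in [set: R]] 0) &
      (forall a b : 'rV[R]_n, (forall i, a ord0 i <= b ord0 i) ->
         forall s : 'rV[R]_n,
           le (volume a b F s) v /\ le 0 (volume a b F s))].
Proof.
move=> le v M F.
have hpo : pogroup le := lex_pogroup hH.1 hG.1.
have vv : le 0 v := v0 hx.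
have FM : forall t, M (F t) := fun t => xM hx (borel_lbox t).
have mono : forall s t : 'rV[R]_n, (forall i, s ord0 i <= t ord0 i) -> le (F s) (F t).
  move=> s t hst; apply: (xmono hpo hx (borel_lbox s) (borel_lbox t)).
  by move=> y hy i; exact: lt_le_trans (hy i) (hst i).
split => //.
- split; [by split => //; exact: le_refl' | by move=> y [t _ <-]; case: (FM t) |].
  move=> c hc hub.
  pose C k := lbox (const_mx (k%:R) : 'rV[R]_n).
  have := sup_incr hpo hx (fun k => borel_lbox _) (C := C) _ hc.
  have -> : \bigcup_k C k = setT.
    apply/seteqP; split => // y _; have [k hk] := bound_fin (fun i => y ord0 i).
    by exists k => // i; rewrite mxE.
  case: hx => _ -> _; apply.
    by move=> k y hy i; rewrite mxE; apply: (lt_le_trans (hy i)); rewrite mxE ler_nat.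
  by move=> k; apply: hub; exists (const_mx k%:R).
- move=> t; split; [exact: FM | by move=> y [s hs <-]; apply: mono => i; exact: ltW (hs i) |].
  move=> c hc hub.
  pose C k := lbox (t - const_mx (k.+1%:R)^-1 : 'rV[R]_n).
  have := sup_incr hpo hx (fun k => borel_lbox _) (C := C) _ hc.
  have -> : \bigcup_k C k = lbox t.
    apply/seteqP; split => y.
      move=> [k _ hy] i; apply: (lt_trans (hy i)); rewrite !mxE ltrBlDr ltrDl invr_gt0 ltr0Sn //.
    move=> hy; have [k hk] := bound_fin (fun i => (t ord0 i - y ord0 i)^-1).
    exists k => // i; rewrite !mxE ltrBrDl -ltrBrDr.
    rewrite invf_plt ?posrE ?subr_gt0 ?ltr0Sn ?hy //.
    by apply: (lt_le_trans (hk i)); rewrite ler_nat.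
  apply.
    move=> k y hy i; apply: (lt_le_trans (hy i)); rewrite !mxE lerD2l lerN2.
    by rewrite lef_pV2 ?posrE ?ltr0Sn // ler_nat.
  move=> k; apply: hub; exists (t - const_mx (k.+1%:R)^-1) => //.
  by move=> i; rewrite !mxE ltrBlDr ltrDl invr_gt0 ltr0Sn.
- move=> i s; split; [by split => //; exact: le_refl' | by move=> y [r _ <-]; case: (FM (upd s i r)) |].
  move=> c hc hlb.
  pose D := lbox (upd s i 0).
  pose E k := lbox (upd s i (- (k%:R))).
  have ED : forall k, E k `<=` D.
    move=> k y hy j; have := hy j; rewrite !updE; case: (j == i) => // /lt_le_trans; apply.
    by rewrite oppr_le0.
  pose C k := D `\` E k.
  have hcD : le c (x D) by apply: hlb; exists 0.
  have := sup_incr hpo hx (C := C) (fun k => borelD (borel_lbox _) (borel_lbox _)) _ (b := x D - c).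
  have -> : \bigcup_k C k = D.
    apply/seteqP; split => y; first by move=> [k _ []].
    move=> hy; have [k hk] := bound_fin (fun j => - y ord0 j).
    exists k => //; split => // hE; have := hE i; rewrite updE eqxx ltrNr.
    by rewrite ltNge (ltW (hk i)).
  move=> h.
  have : le (x D) (x D - c).
    apply: h.
    - move=> k y [hy hE]; split => // hE'; apply: hE => j; have := hE' j; rewrite !updE.
      case: (j == i) => // /lt_trans; apply; rewrite ltrN2 ltr_nat //.
    - split; first by rewrite -le_subE.
      have hc0 : le (- c) 0 by have := le_opp' hpo hc.1; rewrite oppr0.
      have := le_addl' hpo (x D) hc0; rewrite addr0 => h1.
      exact: (le_trans' hpo h1 (FM (upd s i 0)).2).
    - move=> k; rewrite (xdiff hpo hx (borel_lbox _) (borel_lbox _) (ED k)).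
      have hE : le c (x (E k)) by apply: hlb; exists (- (k%:R)).
      by have := le_addr' hpo (x (C k) - c) hE; rewrite [c + _]addrC subrK addrA.
  move=> h2.
  have := le_addl' hpo (- x D) h2; rewrite addNr addrA addNr add0r => h3.
  by have := le_opp' hpo h3; rewrite oppr0 opprK.

- move=> a b hab s; rewrite /volume (vol_box hpo hx hab (enum_uniq _) s).
  by have [] := xM hx (borel_boxl a b s (enum 'I_n)).
Qed.
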